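(* Let $E=(\mathbb{R}^n,\|\cdot\|)$ be a normed space in which the unit vectors $e_1,\dots,e_n$ have norm one, and let $e_1^*,\dots,e_n^*$ be the coordinate functionals. Define $c_1=\max\{c\ge0:\forall A\subset\{1,\dots,n\}\ \exists x^*\in B_{E^*}:\ x^*(e_i)\ge c\ (i\in A),\ x^*(e_i)=0\ (i\notin A)\}$, $c_2=\max\{c\ge0:\sum_i b_ie_i^*\in B_{E^*}\text{ whenever }\max_i|b_i|\le c\}$, $c_3=\min\{\|\sum_{i=1}^na_ie_i\|:\sum_{i=1}^n|a_i|=1\}$. Then $c_1\ge c_2=c_3\ge\frac12c_1$.
   Context: $B_{E^*}$ is the closed unit ball of the dual space $E^*$. *)

(* Defs.v *)
From HB Require Import structures.
From mathcomp Require Import all_boot all_order all_algebra.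
From mathcomp Require Import all_classical all_reals.
Set Implicit Arguments. Unset Strict Implicit. Unset Printing Implicit Defensive.
Import Order.TTheory GRing.Theory Num.Theory.
Local Open Scope ring_scope.
Local Open Scope classical_set_scope.

Definition is_norm (R : realType) (n : nat) (N : 'rV[R]_n -> R) : Prop :=
  [/\ forall x y, N (x + y) <= N x + N y,
      forall (a : R) x, N (a *: x) = `|a| * N x
    & forall x, N x = 0 -> x = 0].

Definition evec (R : realType) (n : nat) (i : 'I_n) : 'rV[R]_n := delta_mx 0 i.

(* The functional sum_i b_i e_i^* (i.e. x |-> sum_i b_i x_i) lies in B_{E^*}. *)
Definition in_dual_ball (R : realType) (n : nat) (N : 'rV[R]_n -> R)
  (b : 'rV[R]_n) : Prop :=
  forall x : 'rV[R]_n, `|\sum_(i < n) b 0 i * x 0 i| <= N x.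

Definition c1 (R : realType) (n : nat) (N : 'rV[R]_n -> R) : R :=
  sup [set c : R | 0 <= c /\
    forall A : {set 'I_n}, exists b : 'rV[R]_n,
      [/\ in_dual_ball N b,
          (forall i, i \in A -> c <= b 0 i)
        & (forall i, i \notin A -> b 0 i = 0)]].

Definition c2 (R : realType) (n : nat) (N : 'rV[R]_n -> R) : R :=
  sup [set c : R | 0 <= c /\
    forall b : 'rV[R]_n, (forall i, `|b 0 i| <= c) -> in_dual_ball N b].

Definition c3 (R : realType) (n : nat) (N : 'rV[R]_n -> R) : R :=
  inf [set N a | a in [set a : 'rV[R]_n | \sum_(i < n) `|a 0 i| = 1]].

(* Main.v *)
Require Import Defs.
From HB Require Import structures.
From mathcomp Require Import all_boot all_order all_algebra.
From mathcomp Require Import all_classical all_reals.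
Import Order.TTheory GRing.Theory Num.Theory.
Local Open Scope ring_scope.
Local Open Scope classical_set_scope.
Set Implicit Arguments. Unset Strict Implicit.

Section Helpers.
Variables (R : realType) (n : nat) (N : 'rV[R]_n -> R).
Hypothesis hn : (0 < n)%N.
Hypothesis hN : is_norm N.
Hypothesis he : forall i : 'I_n, N (evec R i) = 1.

Lemma N0 : N 0 = 0.
Proof.
case: hN => _ hZ _. by have := hZ 0 0; rewrite scale0r normr0 mul0r.
Qed.

Lemma Nge0 (x : 'rV[R]_n) : 0 <= N x.
Proof.
case: hN => hT hZ _.
have := hT x ((-1) *: x).
rewrite hZ scaleN1r subrr N0 normrN normr1 mul1r => h.
have : 0 <= N x * 2 by rewrite mulrC mulr_natl mulr2n.
by rewrite pmulr_lge0.
Qed.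

Let i0 : 'I_n := Ordinal hn.

Lemma sum_evec (b : 'rV[R]_n) i : \sum_(j < n) b 0 j * evec R i 0 j = b 0 i.
Proof.
rewrite (bigD1 i) //= big1 ?addr0.
  by rewrite /evec mxE !eqxx /= mulr1.
by move=> j hj; rewrite /evec mxE (negbTE hj) andbF mulr0.
Qed.

Lemma S1_ub : has_ubound [set c : R | 0 <= c /\
    forall A : {set 'I_n}, exists b : 'rV[R]_n,
      [/\ in_dual_ball N b,
          (forall i, i \in A -> c <= b 0 i)
        & (forall i, i \notin A -> b 0 i = 0)]].
Proof.
exists 1 => c [c0 /(_ [set i0]%SET)] [b [hb hA _]].
have := hb (evec R i0); rewrite sum_evec he => h.
apply: le_trans (hA i0 _) _; first by rewrite !inE.
by apply: le_trans (ler_norm _) h.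
Qed.

Lemma S2_ub : has_ubound [set c : R | 0 <= c /\
    forall b : 'rV[R]_n, (forall i, `|b 0 i| <= c) -> in_dual_ball N b].
Proof.
exists 1 => c [c0 h].
have hb : forall i, `|(const_mx c : 'rV[R]_n) 0 i| <= c by move=> i; rewrite mxE ger0_norm.
have := h _ hb.
move=> /(_ (evec R i0)); rewrite sum_evec he mxE ger0_norm //.
Qed.

Lemma S3_lb : has_lbound [set N a | a in [set a : 'rV[R]_n | \sum_(i < n) `|a 0 i| = 1]].
Proof. by exists 0 => _ [a _ <-]; exact: Nge0. Qed.

Lemma S3_ne : [set N a | a in [set a : 'rV[R]_n | \sum_(i < n) `|a 0 i| = 1]] !=set0.
Proof.
exists (N (evec R i0)); exists (evec R i0) => //=.
rewrite (bigD1 i0) //= big1 ?addr0.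
  by rewrite /evec mxE !eqxx normr1.
by move=> j hj; rewrite /evec mxE (negbTE hj) andbF normr0.
Qed.

Lemma c3_ge0 : 0 <= c3 N.
Proof. apply: lb_le_inf; first exact: S3_ne. by move=> _ [a _ <-]; exact: Nge0. Qed.

Lemma keyL (x : 'rV[R]_n) : c3 N * \sum_(i < n) `|x 0 i| <= N x.
Proof.
set s := \sum_(i < n) `|x 0 i|.
have s0 : 0 <= s by apply: sumr_ge0 => i _.
have [->|sn0] := eqVneq s 0; first by rewrite mulr0 Nge0.
have sp : 0 < s by rewrite lt_neqAle eq_sym sn0.
have h : c3 N <= N (s^-1 *: x).
  apply: ge_inf; first exact: S3_lb.
  exists (s^-1 *: x) => //=.
  under eq_bigr => i _ do rewrite mxE normrM ger0_norm ?invr_ge0 //.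
  by rewrite -mulr_sumr mulVf.
case: hN => _ hZ _.
move: h; rewrite hZ ger0_norm ?invr_ge0 // => h.
have := ler_wpM2r s0 h.
by rewrite mulrAC mulVf // mul1r.
Qed.

Lemma dual_sum (b x : 'rV[R]_n) :
  `|\sum_(i < n) b 0 i * x 0 i| <= \sum_(i < n) `|b 0 i| * `|x 0 i|.
Proof.
apply: le_trans (ler_norm_sum _ _ _) _.
by apply: ler_sum => i _; rewrite normrM.
Qed.

End Helpers.

Theorem lemma6 (R : realType) (n : nat) (N : 'rV[R]_n -> R) :
  (0 < n)%N -> is_norm N -> (forall i : 'I_n, N (evec R i) = 1) ->
  [/\ c2 N <= c1 N, c2 N = c3 N & c1 N / 2 <= c3 N].
Proof.
move=> hn hN he.
have S2ne : [set c : R | 0 <= c /\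
    forall b : 'rV[R]_n, (forall i, `|b 0 i| <= c) -> in_dual_ball N b] !=set0.
  exists 0; split => // b hb x.
  apply: le_trans (dual_sum b x) _.
  rewrite big1 ?(Nge0 hN) // => i _.
  by have := hb i; rewrite normr_le0 => /eqP ->; rewrite normr0 mul0r.
have S1ne : [set c : R | 0 <= c /\
    forall A : {set 'I_n}, exists b : 'rV[R]_n,
      [/\ in_dual_ball N b,
          (forall i, i \in A -> c <= b 0 i)
        & (forall i, i \notin A -> b 0 i = 0)]] !=set0.
  exists 0; split => // A; exists 0; split.
  - by move=> x; rewrite big1 ?normr0 ?(Nge0 hN) // => i _; rewrite mxE mul0r.
  - by move=> i _; rewrite mxE.
  - by move=> i _; rewrite mxE.
split.
- apply: ge_sup => // c [c0 hc].
  apply: ub_le_sup; first exact: S1_ub hn he.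
  split => // A; exists (\row_i (if i \in A then c else 0)); split.
  + apply: hc => i; rewrite mxE; case: ifP => _; rewrite ?normr0 ?ger0_norm //.
  + by move=> i hi; rewrite mxE hi.
  + by move=> i hi; rewrite mxE (negbTE hi).
- apply/eqP; rewrite eq_le; apply/andP; split.
  + apply: ge_sup => // c [c0 hc].
    apply: lb_le_inf; first exact: S3_ne N hn.
    move=> _ [a /= ha <-].
    apply: (le_trans _ (hc (\row_i (if 0 <= a 0 i then c else - c)) _ a)).
    * have -> : \sum_(i < n) (\row_i (if 0 <= a 0 i then c else - c)) 0 i * a 0 i
          = \sum_(i < n) c * `|a 0 i|.
        apply: eq_bigr => i _; rewrite mxE.
        case: ifP => hi; first by rewrite (ger0_norm hi).
        by rewrite ltr0_norm ?mulrN ?mulNr // ltNge hi.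
      rewrite -mulr_sumr ha mulr1 ger0_norm //.
    * by move=> i; rewrite mxE; case: ifP; rewrite ?normrN ger0_norm.
  + apply: ub_le_sup; first exact: S2_ub hn he.
    split; first exact: c3_ge0 hn hN.
    move=> b hb x; apply: le_trans (dual_sum b x) _.
    apply: le_trans (keyL hN x); rewrite mulr_sumr.
    by apply: ler_sum => i _; apply: ler_wpM2r.
- rewrite ler_pdivrMr //.
  apply: ge_sup => // c [c0 hc].
  rewrite -ler_pdivrMr //.
  apply: lb_le_inf; first exact: S3_ne N hn.
  move=> _ [a /= ha <-].
  rewrite ler_pdivrMr // mulrC mulr_natl mulr2n.
  have [b [hb hbA hbC]] := hc [set i | 0 <= a 0 i]%SET.
  have [b' [hb' hbA' hbC']] := hc (~: [set i | 0 <= a 0 i]%SET).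
  have e1 : c <= \sum_(i < n) b 0 i * a 0 i - \sum_(i < n) b' 0 i * a 0 i.
    rewrite -sumrB -[c]mulr1 -ha mulr_sumr; apply: ler_sum => i _.
    have [hi|hi] := boolP (0 <= a 0 i).
    * have iA : i \in [set i | 0 <= a 0 i]%SET by rewrite inE.
      rewrite hbC' ?inE ?negbK // mul0r subr0 ger0_norm //.
      by apply: ler_wpM2r => //; apply: hbA.
    * have iA : i \notin [set i | 0 <= a 0 i]%SET by rewrite inE.
      rewrite hbC // mul0r sub0r ltr0_norm ?ltNge // -mulrN.
      apply: ler_wpM2r; first by rewrite oppr_ge0 ltW // ltNge.
      by apply: hbA'; rewrite inE.
  apply: le_trans e1 _.
  apply: le_trans (ler_norm _) _.
  apply: le_trans (ler_normB _ _) _.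
  by apply: lerD; [apply: hb | apply: hb'].
Qed.
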